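(* Let $\mathcal{SB}=\langle\mathcal{L},A,\to,\text{supp}\rangle$ be an SBAF and $S\subseteq Sent(A)$ a compatible set of sentences. Then $$Arg_w(S)=\bigcup_{i\in\mathbb{N}}R^S_i(Init(S)).$$
   Context: A language is a triple $\mathcal{L}=\langle L,\overline{\cdot},n\rangle$: $L$ is a nonempty set of sentences; $\overline{\cdot}$ assigns to each $s\in L$ a set $\overline{s}\subseteq L$ of sentences incompatible with $s$, and is symmetric; $n$ is a partial naming function assigning to an argument $a$ a sentence $n(a)\in L$ (if undefined, put $\overline{n(a)}:=\emptyset$), with $\overline{n(\langle\{t\},t\rangle)}=\emptyset$. An argument is a pair $a=\langle Prem(a),Conc(a)\rangle$ with $Prem(a)$ a nonempty finite subset of $L$ and $Conc(a)\in L$; $Sent(a):=Prem(a)\cup\{Conc(a)\}$, $Sent(E):=\bigcup_{a\in E}Sent(a)$. Argument $a$ attacks $b$ ($a\to b$) if $Conc(a)\in\overline{s}$ for some $s\in Sent(b)$ or $Conc(a)\in\overline{n(b)}$. An SBAF is $\langle\mathcal{L},A,\to,\text{supp}\rangle$ with $A$ a finite set of arguments. For $E\subseteq A$: $E$ defends $a\in A$ if for every $b\in A$ with $b\to a$ some element of $E$ attacks $b$; $E$ is conflict-free if no $a,b\in E$ with $a\to b$; admissible if conflict-free and defends all its elements. $S$ is compatible if no $s,t\in S$ with $s\in\overline t$. $Arg_s(S):=\{a\in A\mid Prem(a)\subseteq S\text{ and }\overline{n(a)}\cap S=\emptyset\}$; $R^S(E):=\{a\in A\mid a\in Arg_s(S)\text{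 and }E\text{ defends }a\}$; $R^S_0(E):=E$, $R^S_{i+1}(E):=R^S(R^S_i(E))$. For compatible $S$, $Init(S)$ is the largest admissible subset of $\{a\in A\mid Sent(a)\subseteq S\text{ and }\overline{n(a)}\cap S=\emptyset\}$, and $Arg_w(S)$ is the $\subseteq$-least set $E\subseteq A$ with $Init(S)\subseteq E$ and $R^S(E)=E$. *)

(* Defs.v *)
From Stdlib Require Import List.
Import ListNotations.

Set Implicit Arguments.

(* An argument: a pair <Prem(a), Conc(a)>. Finiteness/nonemptiness of Prem is
   imposed via [valid_arg]. *)
Record Arg (L : Type) := mkArg { Prem : L -> Prop ; Conc : L }.
Arguments mkArg {L}.
Arguments Prem {L}.
Arguments Conc {L}.

Definition finite_set {X : Type} (P : X -> Prop) : Prop :=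
  exists l : list X, forall x, P x <-> In x l.

Definition valid_arg {L : Type} (a : Arg L) : Prop :=
  exists l : list L, l <> [] /\ forall s, Prem a s <-> In s l.

Definition single_arg {L : Type} (t : L) : Arg L := mkArg (fun x => x = t) t.

(* A language <L, overline, n>. [contr s t] means t \in overline(s). *)
Record Language (L : Type) := {
  L_nonempty : inhabited L ;
  contr : L -> L -> Prop ;
  contr_sym : forall s t, contr s t -> contr t s ;
  name : Arg L -> option L ;
  name_single : forall t,
      match name (single_arg t) with
      | Some x => forall y, ~ contr x y
      | None => True
      end }.
Arguments contr {L}.
Arguments name {L}.

Section Defs.
Context {L : Type} (Lg : Language L).

Definition contr_name (a : Arg L) (y : L) : Prop :=
  match name Lg a with Some x => contr Lg x y | None => False end.

Definition Sent (a : Arg L) (s : L) : Prop := Prem a s \/ s = Conc a.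
Definition SentE (E : Arg L -> Prop) (s : L) : Prop := exists a, E a /\ Sent a s.

Definition attacks (a b : Arg L) : Prop :=
  (exists s, Sent b s /\ contr Lg s (Conc a)) \/ contr_name b (Conc a).

Variable A : Arg L -> Prop.

Definition subset {X} (P Q : X -> Prop) := forall x, P x -> Q x.

Definition defends (E : Arg L -> Prop) (a : Arg L) : Prop :=
  forall b, A b -> attacks b a -> exists c, E c /\ attacks c b.

Definition conflict_free (E : Arg L -> Prop) : Prop :=
  forall a b, E a -> E b -> ~ attacks a b.

Definition admissible (E : Arg L -> Prop) : Prop :=
  conflict_free E /\ forall a, E a -> defends E a.

Definition compatible (X : L -> Prop) : Prop :=
  forall s t, X s -> X t -> ~ contr Lg t s.

Definition Arg_s (X : L -> Prop) (a : Arg L) : Prop :=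
  A a /\ subset (Prem a) X /\ (forall y, contr_name a y -> ~ X y).

Definition RS (X : L -> Prop) (E : Arg L -> Prop) (a : Arg L) : Prop :=
  Arg_s X a /\ defends E a.

Fixpoint RSi (X : L -> Prop) (i : nat) (E : Arg L -> Prop) : Arg L -> Prop :=
  match i with
  | O => E
  | Datatypes.S j => RS X (RSi X j E)
  end.

Definition init_cand (X : L -> Prop) (a : Arg L) : Prop :=
  A a /\ subset (Sent a) X /\ (forall y, contr_name a y -> ~ X y).

Definition is_Init (X : L -> Prop) (I : Arg L -> Prop) : Prop :=
  subset I (init_cand X) /\ admissible I /\
  forall F, subset F (init_cand X) -> admissible F -> subset F I.

Definition argw_candidate (X : L -> Prop) (I E : Arg L -> Prop) : Prop :=
  subset E A /\ subset I E /\ (forall a, RS X E a <-> E a).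

Definition is_Argw (X : L -> Prop) (I W : Arg L -> Prop) : Prop :=
  argw_candidate X I W /\ forall E, argw_candidate X I E -> subset W E.

End Defs.

(* An SBAF <Lang, A, ->, supp>; the attack relation is determined by Lang. *)
Record SBAF (L : Type) := {
  lang : Language L ;
  args : Arg L -> Prop ;
  args_finite : finite_set args ;
  args_valid : forall a, args a -> valid_arg a ;
  supp : Arg L -> Arg L -> Prop ;
  supp_in : forall a b, supp a b -> args a /\ args b }.
Arguments lang {L}.
Arguments args {L}.
Arguments supp {L}.

(* Main.v *)
Require Import Defs.
From Stdlib Require Import List Classical Lia.

Section Aux.
Context {L : Type} (Lg : Language L) (A : Arg L -> Prop) (S : L -> Prop).

Lemma defends_mono (E F : Arg L -> Prop) a : subset E F -> defends Lg A E a -> defends Lg A F a.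
Proof. intros H D b Hb Hat; destruct (D b Hb Hat) as [c [? ?]]; eauto. Qed.

Lemma RS_mono (E F : Arg L -> Prop) : subset E F -> subset (RS Lg A S E) (RS Lg A S F).
Proof. intros H a [H1 H2]; split; [exact H1|eapply defends_mono; eauto]. Qed.

Lemma cand_cf : compatible Lg S -> conflict_free Lg (init_cand Lg A S).
Proof.
  intros Hc a b [_ [Sa _]] [_ [Sb Nb]] [[s [Hs Hct]] | Hn].
  - apply (Hc s (Conc a)); [apply Sb; exact Hs| apply Sa; right; reflexivity|].
    apply contr_sym; exact Hct.
  - apply (Nb (Conc a) Hn). apply Sa; right; reflexivity.
Qed.

Variable I : Arg L -> Prop.
Hypothesis HI : is_Init Lg A S I.

Lemma I_RS : subset I (RS Lg A S I).
Proof.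
  destruct HI as [Hc [[_ Hd] _]]. intros a Ha.
  destruct (Hc a Ha) as [HA [Hs Hn]]. split; [|apply Hd; exact Ha].
  split; [exact HA|split; [intros x Hx; apply Hs; left; exact Hx|exact Hn]].
Qed.

Lemma RSi_step i : subset (RSi Lg A S i I) (RSi Lg A S (Datatypes.S i) I).
Proof.
  induction i; simpl.
  - apply I_RS.
  - apply RS_mono. exact IHi.
Qed.

Lemma RSi_le i j : i <= j -> subset (RSi Lg A S i I) (RSi Lg A S j I).
Proof.
  induction 1; intros x Hx; auto. apply RSi_step; auto.
Qed.

Definition U a := exists i, RSi Lg A S i I a.

Hypothesis Afin : finite_set A.

Lemma uniform a : defends Lg A U a -> exists i, defends Lg A (RSi Lg A S i I) a.
Proof.
  intros D. destruct Afin as [l Hl].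
  assert (forall l', exists i, forall b, In b l' -> A b -> attacks Lg b a ->
            exists c, RSi Lg A S i I c /\ attacks Lg c b) as Hg.
  { induction l' as [|b0 l' IH].
    - exists 0. intros b [].
    - destruct IH as [i Hi].
      destruct (classic (A b0 /\ attacks Lg b0 a)) as [[HA Hat]|Hno].
      + destruct (D b0 HA Hat) as [c [[j Hj] Hcb]].
        exists (max i j). intros b [<-|Hin] HA' Hat'.
        * exists c; split; [eapply RSi_le; [|exact Hj]; lia|exact Hcb].
        * destruct (Hi b Hin HA' Hat') as [c' [Hc' ?]].
          exists c'; split; [eapply RSi_le; [|exact Hc']; lia|assumption].
      + exists i. intros b [<-|Hin] HA' Hat'.
        * exfalso; apply Hno; auto.
        * apply Hi; auto. }
  destruct (Hg l) as [i Hi]. exists i. intros b Hb Hat.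
  apply Hi; auto. apply Hl; exact Hb.
Qed.

Lemma U_cand : argw_candidate Lg A S I U.
Proof.
  split; [|split].
  - intros a [i Hi]. destruct i; simpl in Hi.
    + destruct HI as [Hc _]. apply (Hc a Hi).
    + apply Hi.
  - intros a Ha; exists 0; exact Ha.
  - intros a; split.
    + intros [Hs D]. destruct (uniform _ D) as [i Hi].
      exists (Datatypes.S i). split; assumption.
    + intros [i Hi]. destruct i; simpl in Hi.
      * apply (RS_mono I U); [intros x Hx; exists 0; exact Hx|apply I_RS; exact Hi].
      * apply (RS_mono (RSi Lg A S i I) U); [intros x Hx; exists i; exact Hx|exact Hi].
Qed.

Lemma U_least E : argw_candidate Lg A S I E -> subset U E.
Proof.
  intros [_ [HIE HE]] a [i Hi]. revert a Hi. induction i; simpl; intros a Hi.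
  - auto.
  - apply HE. eapply RS_mono; [exact IHi|exact Hi].
Qed.

End Aux.

Theorem mainTheorem7 (L : Type) (SB : SBAF L) (S : L -> Prop)
  (HS : subset S (SentE (args SB)))
  (Hcomp : compatible (lang SB) S) :
  (exists I, is_Init (lang SB) (args SB) S I) /\
  forall I, is_Init (lang SB) (args SB) S I ->
    (exists W, is_Argw (lang SB) (args SB) S I W) /\
    forall W, is_Argw (lang SB) (args SB) S I W ->
      forall a, W a <-> exists i : nat, RSi (lang SB) (args SB) S i I a.
Proof.
  split.
  - exists (fun a => exists F, subset F (init_cand (lang SB) (args SB) S) /\
                      admissible (lang SB) (args SB) F /\ F a).
    split; [|split; [split|]].
    + intros a [F [H1 [_ H3]]]; auto.
    + intros a b [F [HF [_ Fa]]] [G [HG [_ Gb]]].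
      apply (cand_cf (lang SB) (args SB) S Hcomp); auto.
    + intros a [F [HF [[Hcf Hd] Ha]]].
      eapply defends_mono; [|apply Hd; exact Ha].
      intros x Hx; exists F. split; [exact HF|split; [split; [exact Hcf|exact Hd]|exact Hx]].
    + intros F HF Had x Hx; exists F; auto.
  - intros I HI. split.
    + exists (U (lang SB) (args SB) S I). split.
      * apply U_cand; [exact HI|apply args_finite].
      * apply U_least.
    + intros W [HW Hl] a. split.
      * intros Ha. apply (Hl _ (U_cand (lang SB) (args SB) S I HI (args_finite SB))). exact Ha.
      * intros Hu. apply (U_least (lang SB) (args SB) S I W HW). exact Hu.
Qed.
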